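(* Let $n\neq 1$ be a real number, $k_n=n-1$, and $k_0\in\mathbb{R}$. On the phase space with canonical coordinates $(r,\phi,p_r,p_\phi)$, $r>0$, consider $$H_{nc}=\tfrac12 r^{2n}\Big(p_r^2+\tfrac{p_\phi^2}{r^2}\Big)+k_0r^{n-1}.$$ With $P_1=r^n\big(p_r\cos(k_n\phi)+\tfrac1r p_\phi\sin(k_n\phi)\big)$ and $P_2=r^n\big(p_r\sin(k_n\phi)-\tfrac1r p_\phi\cos(k_n\phi)\big)$, the functions $$J_1=p_\phi,\qquad J_2=P_2p_\phi-k_0\cos(k_n\phi),\qquad J_3=P_1p_\phi+k_0\sin(k_n\phi)$$ are constants of motion of $H_{nc}$, i.e. they Poisson commute with $H_{nc}$; hence $H_{nc}$ is superintegrable.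
   Context: The Poisson bracket is the canonical one in $(r,\phi,p_r,p_\phi)$. A constant of motion of $H$ is a function $F$ with $\{F,H\}=0$. *)

(* Defs.v *)
From Stdlib Require Import Reals.
From Coquelicot Require Import Coquelicot.
Open Scope R_scope.

Definition phase_fun := R -> R -> R -> R -> R.

Definition poisson (F G : phase_fun) (r phi pr pphi : R) : R :=
    Derive (fun x => F x phi pr pphi) r * Derive (fun x => G r phi x pphi) pr
  - Derive (fun x => F r phi x pphi) pr * Derive (fun x => G x phi pr pphi) r
  + Derive (fun x => F r x pr pphi) phi * Derive (fun x => G r phi pr x) pphi
  - Derive (fun x => F r phi pr x) pphi * Derive (fun x => G r x pr pphi) phi.

Definition kn (n : R) : R := n - 1.

Definition Hnc (n k0 : R) : phase_fun := fun r phi pr pphi =>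
  / 2 * Rpower r (2 * n) * (pr ^ 2 + pphi ^ 2 / r ^ 2) + k0 * Rpower r (n - 1).

Definition P1 (n : R) : phase_fun := fun r phi pr pphi =>
  Rpower r n * (pr * cos (kn n * phi) + / r * pphi * sin (kn n * phi)).

Definition P2 (n : R) : phase_fun := fun r phi pr pphi =>
  Rpower r n * (pr * sin (kn n * phi) - / r * pphi * cos (kn n * phi)).

Definition J1 : phase_fun := fun r phi pr pphi => pphi.

Definition J2 (n k0 : R) : phase_fun := fun r phi pr pphi =>
  P2 n r phi pr pphi * pphi - k0 * cos (kn n * phi).

Definition J3 (n k0 : R) : phase_fun := fun r phi pr pphi =>
  P1 n r phi pr pphi * pphi + k0 * sin (kn n * phi).

(* Main.v *)
Require Import Defs.
From Stdlib Require Import Reals Lra.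
From Coquelicot Require Import Coquelicot.
Open Scope R_scope.

Ltac dd r :=
  match goal with |- context [Derive ?f ?x] =>
    let l := fresh "l" in evar (l : R);
    let H := fresh in
    assert (H : is_derive f x l) by
      (subst l; auto_derive; [ repeat split; try lra; try (apply Rgt_not_eq; lra); try (intro; nra); try (apply pow_nonzero; lra) | reflexivity ]);
    rewrite (is_derive_unique f x l H); subst l; clear H
  end.

Theorem mainTheorem6 (n k0 : R) (hn : n <> 1) :
  forall r phi pr pphi : R, 0 < r ->
    poisson J1 (Hnc n k0) r phi pr pphi = 0 /\
    poisson (J2 n k0) (Hnc n k0) r phi pr pphi = 0 /\
    poisson (J3 n k0) (Hnc n k0) r phi pr pphi = 0.
Proof.
  intros r phi pr pphi hr.
  unfold poisson, J1, J2, J3, P1, P2, Hnc, kn, Rpower.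
  repeat dd r.
  assert (E2 : exp (2 * n * ln r) = exp (n * ln r) * exp (n * ln r)).
  { rewrite <- exp_plus; f_equal; ring. }
  assert (E1 : exp ((n - 1) * ln r) = exp (n * ln r) / r).
  { replace ((n-1) * ln r) with (n * ln r + - ln r) by ring.
    rewrite exp_plus, exp_Ropp, exp_ln by lra. field. lra. }
  rewrite E2, E1.
  pose proof (sin2_cos2 ((n-1)*phi)) as SC. unfold Rsqr in SC.
  set (a := exp (n * ln r)).
  set (c := cos ((n-1)*phi)). set (s := sin ((n-1)*phi)).
  split; [|split]; field_simplify; try lra.


Qed.
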